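(* Let $p,q\ge0$ with $p+q<1$, let $\varepsilon>0$, let $h$ denote the binary entropy in nats, $h(x)=-x\log x-(1-x)\log(1-x)$, and put $\phi=\phi(p,q)=\frac{h(p)-h(q)}{1-p-q}$. Define \[ m_{\mathrm{COUNT}}=\frac{1}{D_{\mathrm{KL}}\big(q\,\|\,1/(1+e^{\phi})\big)}\;k\log(n/k). \] If $m\le(1-\varepsilon)m_{\mathrm{COUNT}}$, then no algorithm can recover $\sigma$ with high probability, for any (non-adaptive) test design with $m$ tests.
   Context: Noisy group testing model: $n$ individuals, $k\sim n^{\theta}$ infected for a fixed $\theta\in(0,1)$; the infection vector $\sigma\in\{0,1\}^n$ is uniformly random among vectors of Hamming weight $k$. Each of the $m$ tests is a pool of individuals; it is truly positive if the pool contains at least one infected individual and truly negative otherwise. The observed result of each test is obtained independently: a truly negative test is displayed positive with probability $p$, a truly positive test is displayed negative with probability $q$. The algorithm sees the test design and the displayed results. $\log$ is natural; $D_{\mathrm{KL}}(r\|s)=r\log(r/s)+(1-r)\log\frac{1-r}{1-s}$. ''With high probability'' means with probability tending to $1$ as $n\to\infty$. *)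

(* Defs.v *)
From HB Require Import structures.
From mathcomp Require Import all_boot all_order all_algebra.
From mathcomp Require Import all_classical all_reals all_analysis.
Set Implicit Arguments. Unset Strict Implicit. Unset Printing Implicit Defensive.
Import Order.TTheory GRing.Theory Num.Theory.
Local Open Scope ring_scope.

Section GT.
Variable R : realType.

(* binary entropy in nats; ln 0 = 0 in mathcomp-analysis, so 0 log 0 = 0 *)
Definition bin_entropy (x : R) : R := - (x * ln x) - (1 - x) * ln (1 - x).

Definition DKL (r s : R) : R :=
  r * ln (r / s) + (1 - r) * ln ((1 - r) / (1 - s)).

Definition phi (p q : R) : R := (bin_entropy p - bin_entropy q) / (1 - p - q).

Definition m_count (p q : R) (n k : nat) : R :=
  (k%:R * ln (n%:R / k%:R)) / DKL q (1 / (1 + expR (phi p q))).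

Definition weight_vectors (n k : nat) : {set {ffun 'I_n -> bool}} :=
  [set s : {ffun 'I_n -> bool} | #|[set i | s i]| == k].

Definition true_result n m (G : 'I_m -> {set 'I_n}) (s : {ffun 'I_n -> bool})
  (a : 'I_m) : bool := [exists i in G a, s i].

(* probability of observing displayed results y given s: independent noisy
   channel, negative -> positive w.p. p, positive -> negative w.p. q *)
Definition channel_prob (p q : R) n m (G : 'I_m -> {set 'I_n})
  (s : {ffun 'I_n -> bool}) (y : {ffun 'I_m -> bool}) : R :=
  \prod_(a : 'I_m)
    (if true_result G s a then (if y a then 1 - q else q)
     else (if y a then p else 1 - p)).

(* success probability of a (possibly randomized) algorithm A, where
   A y s' is the probability that A outputs s' on displayed results y,
   sigma uniform among weight-k vectors *)
Definition success_prob (p q : R) n m (G : 'I_m -> {set 'I_n})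
  (A : {ffun 'I_m -> bool} -> {ffun 'I_n -> bool} -> R) (k : nat) : R :=
  (#|weight_vectors n k|%:R)^-1 *
  \sum_(s in weight_vectors n k) \sum_(y : {ffun 'I_m -> bool})
     channel_prob p q G s y * A y s.

End GT.

(* Main.v *)
Require Import Defs.
From HB Require Import structures.
From mathcomp Require Import all_boot all_order all_algebra.
From mathcomp Require Import all_classical all_reals all_analysis.
From mathcomp Require Import ring lra zify.
Import numFieldNormedType.Exports.
Import Order.TTheory GRing.Theory Num.Theory.
Local Open Scope classical_set_scope.
Local Open Scope ring_scope.

Section Aux.
Variable R : realType.
Implicit Types a b u : R.

Lemma xlnd a b : 0 <= a -> 0 < b -> a * ln (a / b) = a * ln a - a * ln b.
Proof.
move=> a0 b0; have [->|an0] := eqVneq a 0; first by rewrite !mul0r subr0.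
have ap : 0 < a by rewrite lt_neqAle eq_sym an0 a0.
by rewrite ln_div ?posrE // mulrBr.
Qed.

Lemma gibbs a b : 0 <= a -> 0 < b -> a - b <= a * ln (a / b).
Proof.
move=> a0 b0; have [->|an0] := eqVneq a 0; first by rewrite !mul0r sub0r lerNl oppr0 ltW.
have ap : 0 < a by rewrite lt_neqAle eq_sym an0 a0.
have h : ln (b / a) <= b / a - 1.
  have hh : -1 < b / a - 1 by have := divr_gt0 b0 ap; lra.
  have := @le_ln1Dx R (b / a - 1) hh.
  by rewrite (_ : 1 + (b / a - 1) = b / a) //; ring.
have e : ln (a / b) = - ln (b / a) by rewrite -lnV ?posrE ?divr_gt0 // invf_div.
rewrite e mulrN lerNr opprB.
have : a * ln (b / a) <= a * (b / a - 1) by rewrite ler_pM2l.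
by rewrite mulrBr mulr1 mulrCA divff ?mulr1 // gt_eqF.
Qed.

Lemma exp_upper u : u <= 1/2 -> expR u <= 1 + u + 2 * u ^+ 2.
Proof.
move=> hu.
have h1 := expR_ge1Dx (- u).
have pos : 0 < 1 - u by lra.
have e : expR u = (expR (- u))^-1 by rewrite expRN invrK.
rewrite e.
have : (1 - u)^-1 <= 1 + u + 2 * u ^+ 2.
  rewrite -(@ler_pM2l _ (1 - u)) // mulfV ?gt_eqF //.
  have : 0 <= u ^+ 2 * (1 - 2 * u) by apply: mulr_ge0; [exact: sqr_ge0| lra].
  move=> h; rewrite -subr_ge0; set z := (X in 0 <= X).
  have -> : z = u ^+ 2 * (1 - 2 * u) by rewrite /z; ring.
  exact: h.
apply: le_trans; rewrite lef_pV2 ?posrE //; lra.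
Qed.

Lemma ln_prod (I : Type) (r : seq I) (F : I -> R) :
  (forall i, 0 < F i) -> ln (\prod_(i <- r) F i) = \sum_(i <- r) ln (F i).
Proof.
move=> Fp; elim: r => [|x r IH]; first by rewrite !big_nil ln1.
rewrite !big_cons lnM ?IH // posrE //; exact: prodr_gt0.
Qed.

Lemma expR_sum (I : Type) (r : seq I) (F : I -> R) :
  expR (\sum_(i <- r) F i) = \prod_(i <- r) expR (F i).
Proof.
elim: r => [|x r IH]; first by rewrite !big_nil expR0.
by rewrite !big_cons expRD IH.
Qed.

Lemma binom_nat n k : (k <= n)%N -> (n ^ k * k`! <= n ^_ k * k ^ k)%N.
Proof.
move=> kn.
have e : forall c, (c ^ k = \prod_(i < k) c)%N by move=> c; rewrite prod_nat_const card_ord.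
rewrite -{1}ffactnn !ffact_prod !e -!big_split /=.
apply: leq_prod => i _.
have ik := ltn_ord i.
have : (i * k <= i * n)%N by rewrite leq_mul2l kn orbT.
nia.
Qed.

Lemma binom_real n k : (0 < k)%N -> (k <= n)%N ->
  ((n%:R / k%:R) ^+ k : R) <= 'C(n, k)%:R.
Proof.
move=> k0 kn.
have h := @binom_nat n k kn.
rewrite -bin_ffact in h.
have kp : (0 : R) < k%:R by rewrite ltr0n.
have fp : (0 : R) < (k`!)%:R by rewrite ltr0n fact_gt0.
have kkp : (0 : R) < k%:R ^+ k by rewrite exprn_gt0.
rewrite exprMn exprVn ler_pdivrMr //.
rewrite -(ler_pM2r fp) -mulrA [_ ^+ k * _]mulrC mulrA.
rewrite -!natrX -!natrM ler_nat mulnC; apply: (leq_trans h); by rewrite mulnAC.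
Qed.

End Aux.
Lemma card_wv n k : ('C(n, k) <= #|weight_vectors n k|)%N.
Proof.
pose f (B : {set 'I_n}) : {ffun 'I_n -> bool} := [ffun i => i \in B].
have finj : injective f.
  move=> B1 B2 /ffunP e; apply/finset.setP => i; have := e i; by rewrite !ffunE.
have -> : 'C(n, k) = #|[set B : {set 'I_n} | #|B| == k]%SET| by rewrite card_draws card_ord.
rewrite -(card_imset _ finj); apply: subset_leq_card.
apply/fintype.subsetP => s /imsetP [B]; rewrite inE => /eqP cB ->.
rewrite /weight_vectors inE; apply/eqP; rewrite -cB.
have -> : [set i | f B i]%SET = B by apply/finset.setP => i; rewrite inE ffunE.
done.
Qed.

Section Chan.
Variables (R : realType) (p q : R).
Hypotheses (p0 : 0 <= p) (q0 : 0 <= q) (pq : p + q < 1).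

Ltac hyps := have := p0; have := q0; have := pq.

Definition s0 : R := 1 / (1 + expR (phi p q)).
Definition W (x y : bool) : R :=
  if x then (if y then 1 - q else q) else (if y then p else 1 - p).
Definition Qs (y : bool) : R := if y then 1 - s0 else s0.
Definition ell x b := ln (W x b / Qs b).
Definition C := DKL q s0.

Lemma s0_gt0 : 0 < s0.
Proof. by rewrite /s0 div1r invr_gt0 ltr_wpDr // ?expR_ge0 ?ltr01. Qed.

Lemma s0_lt1 : s0 < 1.
Proof.
have h : 1 < 1 + expR (phi p q) by rewrite ltrDl expR_gt0.
rewrite /s0 div1r invf_lt1 //; exact: lt_trans h.
Qed.

Lemma ln1s0 : ln (1 - s0) = ln s0 + phi p q.
Proof.
have hp : 0 < 1 + expR (phi p q) by rewrite ltr_wpDr // ?expR_ge0 ?ltr01.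
have -> : 1 - s0 = s0 * expR (phi p q).
  rewrite /s0; field; exact: lt0r_neq0.
by rewrite lnM ?posrE ?expR_gt0 ?s0_gt0 // expRK.
Qed.

Lemma W_ge0 x y : 0 <= W x y.
Proof. case: x; case: y => /=; hyps; lra. Qed.

Lemma W_sum x : W x true + W x false = 1.
Proof. case: x => /=; ring. Qed.

Lemma Qs_gt0 y : 0 < Qs y.
Proof. have := s0_gt0; have := s0_lt1; case: y => /=; lra. Qed.

Lemma DW x : W x true * ell x true + W x false * ell x false = C.
Proof.
rewrite /ell /C /DKL /=; case: x => /=; first by rewrite addrC.
have s1 : 0 < 1 - s0 by have := s0_lt1; lra.
rewrite !xlnd ?s0_gt0 //; try (hyps; lra).
rewrite ln1s0.
have hph : phi p q * (1 - p - q) = bin_entropy p - bin_entropy q.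
  rewrite /phi divfK //; apply: lt0r_neq0; hyps; lra.
move: hph; rewrite /bin_entropy.
set ph := phi p q.
lra.
Qed.

Lemma C_ge0 : 0 <= C.
Proof.
have s1 : 0 < 1 - s0 by have := s0_lt1; lra.
have h1 := @gibbs R q s0 q0 s0_gt0.
have h2 := @gibbs R (1 - q) (1 - s0) ltac:(hyps; lra) s1.
rewrite /C /DKL; lra.
Qed.

Definition M : R := 1 + `|ell false false| + `|ell false true| + `|ell true false| + `|ell true true|.

Lemma ell_le x b : -M <= ell x b <= M.
Proof.
rewrite -ler_norml.
have := normr_ge0 (ell false false); have := normr_ge0 (ell false true).
have := normr_ge0 (ell true false); have := normr_ge0 (ell true true).
rewrite /M; case: x; case: b; lra.
Qed.

Lemma M_ge1 : 1 <= M.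
Proof.
have := normr_ge0 (ell false false); have := normr_ge0 (ell false true).
have := normr_ge0 (ell true false); have := normr_ge0 (ell true true).
rewrite /M; lra.
Qed.

Definition gfun t x := \sum_(b : bool) W x b * expR (t * ell x b).

Lemma term_le t x b : 0 <= t -> t * M <= 1/2 ->
  W x b * expR (t * ell x b) <= W x b * (1 + t * ell x b + 2 * (t ^+ 2 * M ^+ 2)).
Proof.
move=> t0 tM; apply: ler_wpM2l; first exact: W_ge0.
have /andP [l1 l2] := ell_le x b.
have tl : t * ell x b <= 1/2.
  apply: le_trans tM; exact: ler_wpM2l.
apply: le_trans (@exp_upper R _ tl) _.
rewrite lerD2l ler_pM2l ?ltr0n // exprMn ler_wpM2l ?sqr_ge0 //.
have : 0 <= (M - ell x b) * (M + ell x b) by apply: mulr_ge0; lra.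
rewrite !expr2; nra.
Qed.

Lemma gfun_le t x : 0 <= t -> t * M <= 1/2 ->
  gfun t x <= expR (t * C + 2 * (t ^+ 2 * M ^+ 2)).
Proof.
move=> t0 tM; rewrite /gfun big_bool /=.
apply: le_trans (lerD (term_le t x true t0 tM) (term_le t x false t0 tM)) _.
apply: le_trans (expR_ge1Dx _).
have e1 := W_sum x; have e2 := DW x.
set z := 2 * (t ^+ 2 * M ^+ 2).
rewrite -e2.
have -> : W x true * (1 + t * ell x true + z) + W x false * (1 + t * ell x false + z)
  = (W x true + W x false) * (1 + z) + t * (W x true * ell x true + W x false * ell x false) by ring.
rewrite e1 e2 /=; lra.
Qed.

Lemma pw m (x : 'I_m -> bool) (y : {ffun 'I_m -> bool}) (a L t : R) :
  0 <= a <= 1 -> 0 < t ->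
  (\prod_i W (x i) (y i)) * a <= expR L * (\prod_i Qs (y i)) * a +
    expR (- (t * L)) * \prod_i (W (x i) (y i) * expR (t * ell (x i) (y i))).
Proof.
move=> /andP [a0 a1] t0.
set P := \prod_i W (x i) (y i); set Q := \prod_i Qs (y i).
have Qp : 0 < Q by apply: prodr_gt0 => i _; exact: Qs_gt0.
have P0 : 0 <= P by apply: prodr_ge0 => i _; exact: W_ge0.
have R0 : 0 <= \prod_i (W (x i) (y i) * expR (t * ell (x i) (y i))).
  by apply: prodr_ge0 => i _; apply: mulr_ge0; [exact: W_ge0 | exact: expR_ge0].
have T2 : 0 <= expR (- (t * L)) * \prod_i (W (x i) (y i) * expR (t * ell (x i) (y i))).
  by apply: mulr_ge0; [exact: expR_ge0|].
have T1 : 0 <= expR L * Q * a by rewrite !mulr_ge0 ?expR_ge0 ?(ltW Qp).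
case: (lerP P (expR L * Q)) => hP.
  apply: le_trans (_ : _ <= expR L * Q * a) _; first exact: ler_wpM2r.
  by rewrite lerDl.
have eLQ : 0 < expR L * Q by apply: mulr_gt0 => //; exact: expR_gt0.
have Pp : 0 < P by apply: lt_trans hP.
have Wp : forall i, 0 < W (x i) (y i).
  move=> i; rewrite lt_neqAle W_ge0 andbT eq_sym; apply/negP => /eqP Wi.
  move: Pp; rewrite /P (bigD1 i) //= Wi mul0r ltxx //.
have hs : \sum_i ell (x i) (y i) = ln P - ln Q.
  rewrite /P /Q (@ln_prod R _ _ (fun i => W (x i) (y i))) //.
  rewrite (@ln_prod R _ _ (fun i => Qs (y i))); last by move=> i; exact: Qs_gt0.
  apply/eqP; rewrite eq_sym subr_eq -big_split /=; apply/eqP; apply: eq_bigr => i _.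
  rewrite /ell ln_div ?posrE ?Qs_gt0 //; ring.
have hlt : L + ln Q < ln P.
  by rewrite -[L]expRK -lnM ?posrE ?expR_gt0 // ltr_ln // posrE.
rewrite big_split /= -/P -expR_sum -mulr_sumr hs.
apply: le_trans (_ : _ <= P) _; first by rewrite -{2}(mulr1 P) ler_wpM2l.
apply: le_trans (_ : _ <= expR (- (t * L)) * (P * expR (t * (ln P - ln Q)))) _; last by rewrite lerDr.
rewrite mulrCA -expRD -{1}(mulr1 P) ler_wpM2l //.
rewrite -expR0 ler_expR.
have : 0 <= t * (ln P - ln Q - L) by apply: mulr_ge0; [exact: ltW | lra].
lra.
Qed.

Lemma success_bound n m (G : 'I_m -> {set 'I_n})
  (A : {ffun 'I_m -> bool} -> {ffun 'I_n -> bool} -> R) k (L t : R) :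
  (forall y s, 0 <= A y s) -> (forall y, \sum_s A y s = 1) -> 0 < t -> t * M <= 1/2 ->
  (0 < #|weight_vectors n k|)%N ->
  success_prob p q G A k <= expR L / #|weight_vectors n k|%:R +
     expR (- (t * L)) * expR (m%:R * (t * C + 2 * (t ^+ 2 * M ^+ 2))).
Proof.
move=> A0 A1 t0 tM N0.
set N := #|weight_vectors n k|.
set Gm := expR (t * C + 2 * (t ^+ 2 * M ^+ 2)).
have Np : (0 : R) < N%:R by rewrite ltr0n.
have Ale1 : forall y s, A y s <= 1.
  move=> y s; rewrite -(A1 y) (bigD1 s) //= lerDl; apply: sumr_ge0 => *; exact: A0.
rewrite /success_prob -/N.
pose Qp (y : {ffun 'I_m -> bool}) := \prod_i Qs (y i).
pose Rr (s : {ffun 'I_n -> bool}) (y : {ffun 'I_m -> bool}) :=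
  \prod_i (W (true_result G s i) (y i) * expR (t * ell (true_result G s i) (y i))).
have step1 : \sum_(s in weight_vectors n k) \sum_y channel_prob p q G s y * A y s <=
   \sum_(s in weight_vectors n k) \sum_y (expR L * Qp y * A y s + expR (- (t * L)) * Rr s y).
  apply: ler_sum => s _; apply: ler_sum => y _.
  apply: pw => //; by rewrite A0 Ale1.
have sQ : \sum_(y : {ffun 'I_m -> bool}) Qp y = 1.
  rewrite /Qp -(bigA_distr_bigA (fun (i : 'I_m) (b : bool) => Qs b)) /=.
  apply: big1 => i _; rewrite big_bool /=; ring.
have b1 : \sum_(s in weight_vectors n k) \sum_y Qp y * A y s <= 1.
  rewrite exchange_big /= -[X in _ <= X]sQ; apply: ler_sum => y _.
  rewrite -mulr_sumr -{2}(mulr1 (Qp y)); apply: ler_wpM2l.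
    by apply: prodr_ge0 => i _; exact: ltW (Qs_gt0 _).
  rewrite -(A1 y) [X in _ <= X](bigID (fun s => s \in weight_vectors n k)) /= lerDl.
  by apply: sumr_ge0 => *; exact: A0.
have b2 : forall s, \sum_y Rr s y <= Gm ^+ m.
  move=> s; rewrite /Rr -(bigA_distr_bigA (fun (i : 'I_m) (b : bool) =>
     W (true_result G s i) b * expR (t * ell (true_result G s i) b))) /=.
  rewrite -[m in X in _ <= X](card_ord m) -prodr_const.
  apply: ler_prod => i _; apply/andP; split.
    by apply: sumr_ge0 => b _; apply: mulr_ge0; [exact: W_ge0|exact: expR_ge0].
  exact: gfun_le (ltW t0) tM.
have b3 : \sum_(s in weight_vectors n k) \sum_y Rr s y <= N%:R * Gm ^+ m.
  apply: le_trans (_ : _ <= \sum_(s in weight_vectors n k) Gm ^+ m) _.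
    by apply: ler_sum => s _; exact: b2.
  by rewrite sumr_const -/N mulr_natl.
have e : \sum_(s in weight_vectors n k) \sum_y (expR L * Qp y * A y s + expR (- (t * L)) * Rr s y)
  = expR L * (\sum_(s in weight_vectors n k) \sum_y Qp y * A y s) +
    expR (- (t * L)) * (\sum_(s in weight_vectors n k) \sum_y Rr s y).
  rewrite !mulr_sumr -big_split /=; apply: eq_bigr => s _.
  rewrite !mulr_sumr -big_split /=; apply: eq_bigr => y _; ring.
rewrite expRM_natl -/Gm.
apply: le_trans (_ : _ <= N%:R^-1 * (expR L * 1 + expR (- (t * L)) * (N%:R * Gm ^+ m))) _.
  apply: ler_wpM2l; first by rewrite invr_ge0 ltW.
  apply: le_trans step1 _; rewrite e.
  apply: lerD; apply: ler_wpM2l; rewrite ?expR_ge0 //.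
by rewrite mulrDr mulr1 mulrCA mulKf ?gt_eqF // mulrC.
Qed.


Lemma expN_le (u : R) : 3 <= u -> expR (- u) <= 1/4.
Proof.
move=> u3; have h4 : (0:R) < 4 by lra.
rewrite expRN div1r lef_pV2 ?posrE ?expR_gt0 //.
have := expR_ge1Dx u; lra.
Qed.

Lemma get_t (e : R) : 0 < e -> e <= 1/2 ->
  exists t : R, 0 < t /\ t * M <= 1/2 /\
   forall (mm : nat) (B : R), 0 <= B -> mm%:R <= (1 - e) * (B / C) ->
     mm%:R * (t * C + 2 * (t ^+ 2 * M ^+ 2)) <= (1 - 3 * e / 4) * t * B.
Proof.
move=> e0 e1.
have M1 := M_ge1; have Cge := C_ge0.
have Mp : 0 < M by lra.
have [Cz|Cpos] : C = 0 \/ 0 < C.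
  by move: Cge; rewrite le_eqVlt => /orP [/eqP ->|->]; [left|right].
  exists (1 / (2 * M)); split; first by apply: divr_gt0; lra.
  split.
    rewrite le_eqVlt; apply/orP; left; apply/eqP; field; apply: lt0r_neq0; lra.
  move=> mm B B0; rewrite Cz invr0 !mulr0 => hmm.
  have -> : mm%:R = 0 :> R by apply/le_anti; rewrite hmm ler0n.
  rewrite mul0r; apply: mulr_ge0 => //; apply: mulr_ge0; first lra.
  apply: divr_ge0; lra.
pose D := 8 * M ^+ 2 + 2 * M * e * C.
have Dp : 0 < D.
  rewrite /D; have : 0 < M ^+ 2 by rewrite exprn_gt0.
  have : 0 <= M * e * C by rewrite !mulr_ge0 //; lra.
  lra.
exists (e * C / D).
have tp : 0 < e * C / D by rewrite !divr_gt0 // mulr_gt0.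
split => //; split.
  rewrite mulrAC ler_pdivrMr // /D.
  have : 0 <= M ^+ 2 by rewrite sqr_ge0.
  lra.
have hz : 2 * (e * C / D) * M ^+ 2 <= e * C / 4.
  rewrite (_ : 2 * (e * C / D) * M ^+ 2 = 2 * (e * C) * M ^+ 2 / D); last by ring.
  rewrite ler_pdivrMr // /D.
  have : 0 <= M * e * C * (e * C) by rewrite !mulr_ge0 //; lra.
  lra.
move=> mm B B0 hmm.
set t := e * C / D in tp hz *.
have hmC : mm%:R * C <= (1 - e) * B.
  have := ler_wpM2r (ltW Cpos) hmm.
  by rewrite -mulrA divfK // gt_eqF.
have mm0 : (0 : R) <= mm%:R by rewrite ler0n.
have s1 : mm%:R * (t * C + 2 * (t ^+ 2 * M ^+ 2)) = t * (mm%:R * C + mm%:R * (2 * t * M ^+ 2)).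
  by rewrite expr2; ring.
rewrite s1.
have s2 : mm%:R * (2 * t * M ^+ 2) <= mm%:R * (e * C / 4) by rewrite ler_wpM2l.
have s3 : mm%:R * (e * C / 4) = (e / 4) * (mm%:R * C) by ring.
have s4 : (e / 4) * (mm%:R * C) <= (e / 4) * ((1 - e) * B) by rewrite ler_wpM2l //; lra.
have s5 : 0 <= e * e * B by rewrite !mulr_ge0 //; lra.
have fin : mm%:R * C + mm%:R * (2 * t * M ^+ 2) <= (1 - 3 * e / 4) * B by lra.
rewrite (_ : (1 - 3 * e / 4) * t * B = t * ((1 - 3 * e / 4) * B)); last by ring.
by rewrite ler_pM2l.
Qed.

Lemma growth (theta : R) (k : nat -> nat) : 0 < theta -> theta < 1 ->
  ((fun n : nat => ((k n)%:R / (n%:R `^ theta) : R)) @ \oo --> (1 : R)) ->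
  forall X : R, 0 < X -> exists N, forall n, (N <= n)%N ->
    [/\ (0 < k n)%N, (k n <= n)%N & X <= (k n)%:R * ln (n%:R / (k n)%:R)].
Proof.
move=> th0 th1 hk X X0.
have h12 : (0:R) < 1/2 by lra.
have [N2 _ HN2] := @cvgr_dist_lt _ _ _ _ _ (fun n : nat => ((k n)%:R / (n%:R `^ theta) : R)) 1 hk (1/2) h12.
have l2 : 0 < ln (2:R) by apply: ln_gt0; lra.
pose Z := 2 * X / ln 2 + 2.
have Zp : 0 < Z.
  have : 0 < 2 * X / ln 2 by rewrite divr_gt0 // mulr_gt0.
  rewrite /Z; lra.
pose Y := `|ln Z| / theta + `|ln (4:R)| / (1 - theta).
exists (maxn N2 (Num.truncn (expR Y)).+1).
move=> n; rewrite geq_max => /andP [hn2 hn3].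
have nY : expR Y < n%:R.
  apply: lt_le_trans (truncnS_gt _) _; by rewrite ler_nat.
have np : 0 < n%:R :> R by apply: lt_trans nY; exact: expR_gt0.
have lnY : Y <= ln n%:R by rewrite -(expRK Y) ler_ln ?posrE ?expR_gt0 // ltW.
pose pw := expR (theta * ln (n%:R : R)).
have pwp : 0 < pw by exact: expR_gt0.
have epw : n%:R `^ theta = pw by rewrite /powR gt_eqF.
have th1' : 0 < 1 - theta by lra.
have a1 : `|ln Z| <= theta * ln (n%:R : R).
  apply: le_trans (_ : _ <= theta * Y) _; last by rewrite ler_wpM2l // ltW.
  rewrite /Y mulrDr mulrCA divff ?gt_eqF // mulr1 lerDl.
  by rewrite mulr_ge0 ?divr_ge0 // ltW.
have a2 : `|ln (4:R)| <= (1 - theta) * ln (n%:R : R).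
  apply: le_trans (_ : _ <= (1 - theta) * Y) _; last by rewrite ler_wpM2l // ltW.
  rewrite /Y mulrDr [X in _ <= _ + X]mulrCA divff ?gt_eqF // mulr1 lerDr.
  by rewrite mulr_ge0 ?divr_ge0 // ltW.
have hZ : Z <= pw.
  rewrite -[Z]lnK ?posrE // ler_expR; apply: le_trans a1; exact: ler_norm.
have h4 : 4 * pw <= n%:R.
  have -> : (n%:R : R) = expR ((1 - theta) * ln n%:R) * pw.
    by rewrite -expRD -mulrDl subrK mul1r lnK // posrE.
  rewrite ler_pM2r //.
  have h4p : (0:R) < 4 by lra.
  rewrite -[4]lnK ?posrE // ler_expR; apply: le_trans a2; exact: ler_norm.
have := HN2 n hn2; rewrite /= epw ltr_norml => /andP [b1 b2].
set kr := (k n)%:R : R.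
set r := kr / pw in b1 b2.
have ekr : kr = r * pw by rewrite /r divfK // gt_eqF.
have k1 : Z / 2 < kr by rewrite ekr; nra.
have k2 : 2 * kr <= n%:R by rewrite ekr; nra.
have krp : 0 < kr by apply: lt_trans k1; lra.
split.
- by rewrite -(ltr0n R).
- by rewrite -(ler_nat R); lra.
have hl : ln 2 <= ln (n%:R / kr).
  have h2 : (0:R) < 2 by lra.
  by rewrite ler_ln ?posrE ?divr_gt0 // ler_pdivlMr.
have kX : X / ln 2 <= kr.
  apply: le_trans (ltW k1); rewrite /Z.
  have : 0 <= X / ln 2 by rewrite divr_ge0 // ltW.
  rewrite mulrAC. lra.
apply: le_trans (_ : _ <= kr * ln 2) _; last by rewrite ler_wpM2l // ltW.
by rewrite -ler_pdivrMr.
Qed.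

Lemma main_chan (theta eps : R) (k m : nat -> nat)
  (G : forall n : nat, 'I_(m n) -> {set 'I_n})
  (A : forall n : nat, {ffun 'I_(m n) -> bool} -> {ffun 'I_n -> bool} -> R) :
  0 < theta -> theta < 1 -> 0 < eps ->
  ((fun n : nat => ((k n)%:R / (n%:R `^ theta) : R)) @ \oo --> (1 : R)) ->
  (exists N : nat, forall n : nat, (N <= n)%N ->
      (m n)%:R <= (1 - eps) * m_count p q n (k n)) ->
  (forall n y s, 0 <= A n y s) ->
  (forall n y, \sum_(s : {ffun 'I_n -> bool}) A n y s = 1) ->
  ~ ((fun n : nat => (success_prob p q (G n) (A n) (k n) : R)) @ \oo --> (1 : R)).
Proof.
move=> th0 th1 e0 hk [N1 hm] A0 A1 hs.
pose e := if eps <= 1/2 then eps else 1/2.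
have [e0' e1 e2] : [/\ 0 < e, e <= 1/2 & e <= eps].
  rewrite /e; case: (lerP eps (1/2)) => h; split; lra.
have [t [t0 [tM key]]] := @get_t e e0' e1.
have Cge := C_ge0.
pose X := 12 / e + 6 / (t * e).
have X0 : 0 < X by rewrite /X addr_gt0 // divr_gt0 // ?mulr_gt0 //; lra.
have [N3 HN3] := @growth theta k th0 th1 hk X X0.
have h12 : (0:R) < 1/2 by lra.
have [N2 _ HN2] := @cvgr_dist_lt _ _ _ _ _
  (fun n : nat => (success_prob p q (G n) (A n) (k n) : R)) 1 hs (1/2) h12.
pose n := maxn N1 (maxn N2 N3).
have hn1 : (N1 <= n)%N by rewrite leq_maxl.
have hn2 : (N2 <= n)%N by rewrite /n (maxnC N2) maxnA leq_maxr.
have hn3 : (N3 <= n)%N by rewrite /n maxnA leq_maxr.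
have := HN2 n hn2; rewrite /= ltr_norml => /andP [_ big].
have [kp kn BX] := HN3 n hn3.
set kr := (k n)%:R : R in BX.
set B := kr * ln (n%:R / kr) in BX.
have B0 : 0 <= B by apply: le_trans BX; exact: ltW.
have krp : 0 < kr by rewrite ltr0n.
have nkp : 0 < n%:R / kr.
  apply: divr_gt0 => //; rewrite ltr0n; exact: leq_trans kp kn.
set NN := #|weight_vectors n (k n)|.
have CN : (('C(n, k n))%:R : R) <= NN%:R by rewrite ler_nat card_wv.
have Cp : (0 : R) < ('C(n, k n))%:R by rewrite ltr0n bin_gt0.
have NNp : (0 < NN)%N by rewrite -(ltr0n R); exact: lt_le_trans CN.
have NNr : (0 : R) < NN%:R by rewrite ltr0n.
have lnN : B <= ln (NN%:R : R).
  apply: le_trans (_ : _ <= ln ((n%:R / kr) ^+ k n)) _.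
    by rewrite lnXn // /B /kr mulrC mulr_natr.
  rewrite ler_ln ?posrE ?exprn_gt0 //; apply: le_trans CN; exact: binom_real.
pose L := ln (NN%:R : R) - e * B / 4.
have sb := @success_bound n (m n) (G n) (A n) (k n) L t (A0 n) (A1 n) t0 tM NNp.
have hmB : (m n)%:R <= (1 - e) * (B / C).
  apply: le_trans (hm n hn1) _.
  rewrite (_ : m_count p q n (k n) = B / C) //.
  apply: ler_wpM2r; first exact: divr_ge0.
  lra.
have kk := key (m n) B B0 hmB.
have t1 : expR L / NN%:R = expR (- (e * B / 4)).
  by rewrite /L expRD lnK ?posrE // mulrAC divff ?gt_eqF // mul1r.
have t2 : expR (- (t * L)) * expR ((m n)%:R * (t * C + 2 * (t ^+ 2 * M ^+ 2)))
   <= expR (- (t * e / 2 * B)).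
  rewrite -expRD ler_expR /L.
  have : t * B <= t * ln (NN%:R : R) by rewrite ler_wpM2l // ltW.
  lra.
have u1 : 3 <= e * B / 4.
  have : e * X <= e * B by rewrite ler_wpM2l // ltW.
  have -> : e * X = 12 + 6 / t by rewrite /X; field; apply/andP; split; apply: lt0r_neq0.
  have : 0 <= 6 / t by rewrite divr_ge0 // ltW.
  lra.
have u2 : 3 <= t * e / 2 * B.
  have : t * e * X <= t * e * B by rewrite ler_wpM2l // ?mulr_ge0 // ltW.
  have -> : t * e * X = 12 * t + 6 by rewrite /X; field; apply/andP; split; apply: lt0r_neq0.
  lra.
have := @expN_le _ u1; have := @expN_le _ u2.
move: sb big; rewrite t1.
set sp := success_prob _ _ _ _ _.
lra.
Qed.

End Chan.

Theorem theorem2p3 (R : realType) (theta p q eps : R) (k m : nat -> nat)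
  (G : forall n : nat, 'I_(m n) -> {set 'I_n})
  (A : forall n : nat, {ffun 'I_(m n) -> bool} -> {ffun 'I_n -> bool} -> R) :
  0 < theta -> theta < 1 ->
  0 <= p -> 0 <= q -> p + q < 1 -> 0 < eps ->
  ((fun n : nat => ((k n)%:R / (n%:R `^ theta) : R)) @ \oo --> (1 : R)) ->
  (exists N : nat, forall n : nat, (N <= n)%N ->
      (m n)%:R <= (1 - eps) * m_count p q n (k n)) ->
  (forall n y s, 0 <= A n y s) ->
  (forall n y, \sum_(s : {ffun 'I_n -> bool}) A n y s = 1) ->
  ~ ((fun n : nat => (success_prob p q (G n) (A n) (k n) : R)) @ \oo --> (1 : R)).
Proof.
move=> th0 th1 p0 q0 pq e0 hk hm A0 A1.
exact: (@main_chan R p q p0 q0 pq theta eps k m G A th0 th1 e0 hk hm A0 A1).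
Qed.
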